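(* Let $f\in\mathbb{Z}[t]$ be irreducible, and let $\alpha$ be a root of $f$ lying in its splitting field. Suppose that $f(t)=g(h(t))-t$ with $g,h\in\mathbb{Z}[t]$ both of degree exceeding $1$. Then $f(g(t))$ is divisible by the minimal polynomial of $h(\alpha)$ over $\mathbb{Q}$, and hence $f$ admits polysmoothness $1-1/\deg(g)$.
   Context: A polynomial $f\in\mathbb{Z}[t]$ of positive degree admits polysmoothness $\theta$ (for a real $\theta\ge 0$) if there exists a non-constant polynomial $g\in\mathbb{Z}[t]$ such that every irreducible factor of $f(g(t))$ has degree at most $\theta\,(\deg f)(\deg g)$. *)

(* Defs.v *)
From HB Require Import structures.
From mathcomp Require Import all_boot all_order all_algebra all_field.
Set Implicit Arguments. Unset Strict Implicit. Unset Printing Implicit Defensive.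
Import Order.TTheory GRing.Theory Num.Theory.
Local Open Scope ring_scope.

Definition is_minpoly_Q (x : algC) (p : {poly rat}) : Prop :=
  [/\ p \is monic, root (map_poly ratr p) x &
      forall q : {poly rat}, q != 0 -> root (map_poly ratr q) x ->
        (size p <= size q)%N].

(* Irreducible factors are taken in Q[t] (positive-degree irreducible factors
   in Z[t] and Q[t] have the same degrees; constant factors have degree 0). *)
Definition admits_polysmoothness (f : {poly int}) (theta : rat) : Prop :=
  exists g : {poly int}, (1 < size g)%N /\
    forall q : {poly rat}, irreducible_poly q ->
      q %| map_poly intr (f \Po g) ->
      ((size q).-1)%:R <= theta * ((size f).-1)%:R * ((size g).-1)%:R.

(* Main.v *)
Require Import Defs.
From HB Require Import structures.
From mathcomp Require Import all_boot all_order all_algebra all_field.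
From mathcomp Require Import zify ring.
Import Order.TTheory GRing.Theory Num.Theory.
Local Open Scope ring_scope.

Lemma dvd_comp_sub (R : fieldType) (w u v : {poly R}) :
  (u - v) %| ((w \Po u) - (w \Po v)).
Proof.
rewrite !comp_polyE -sumrB; apply: (big_ind (fun x => (u - v) %| x)).
- exact: dvdp0.
- by move=> x y; apply: dvdp_add.
move=> i _.
by rewrite -scalerBr subrXX scalerAr dvdp_mulIl.
Qed.

Lemma size_subX (R : idomainType) (P : {poly R}) :
  (2 < size P)%N -> size (P - 'X) = size P.
Proof.
move=> hP; rewrite size_addl // size_opp size_polyX //.
Qed.

Lemma size_comp_big (R : idomainType) (P Q : {poly R}) :
  (1 < size P)%N -> (1 < size Q)%N ->
  size (P \Po Q) = ((size P).-1 * (size Q).-1).+1.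
Proof.
move=> hP hQ; have := size_comp_poly P Q.
case: (size (P \Po Q)) => [|n] /= E; last by rewrite E.
have : (0 < (size P).-1 * (size Q).-1)%N by rewrite muln_gt0; apply/andP; split; lia.
by rewrite -E.
Qed.

Lemma key (a b : nat) : (2 <= a)%N -> (a * b <= a * b * a - a * b)%N.
Proof. move=> ha. have : (a * b * 2 <= a * b * a)%N by rewrite leq_mul2l ha orbT. lia. Qed.

Lemma aux1 (s a b : nat) : (s <= a.+1)%N -> (a <= b)%N -> (s.-1 <= b)%N.
Proof. lia. Qed.

Theorem corollary1p4 (f g h : {poly int}) (alpha : algC) :
  irreducible_poly (map_poly intr f : {poly rat}) ->
  root (map_poly intr f) alpha ->
  f = (g \Po h) - 'X ->
  (2 < size g)%N -> (2 < size h)%N ->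
  (forall p : {poly rat}, is_minpoly_Q (map_poly intr h).[alpha] p ->
      p %| map_poly intr (f \Po g)) /\
  admits_polysmoothness f (1 - (((size g).-1)%:R)^-1).
Proof.
move=> _ ra ef sg sh; split.
  move=> p [mon rt minl].
  set beta := (map_poly intr h).[alpha].
  have hFc : map_poly intr f = (map_poly intr g \Po map_poly intr h) - 'X :> {poly algC}.
    by rewrite ef raddfB /= map_polyX; congr (_ - _); exact: map_comp_poly.
  have gb : (map_poly intr g).[beta] = alpha :> algC.
    move: ra; rewrite /root hFc hornerD hornerN horner_comp hornerX subr_eq0.
    by move/eqP.
  have rFG : root (map_poly ratr (map_poly intr (f \Po g) : {poly rat})) beta.
    rewrite -map_poly_comp_id0 ?rmorph0 //.
    rewrite (eq_map_poly (g := intr)); last by move=> z /=; rewrite ratr_int.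
    by rewrite map_comp_poly /root horner_comp gb.
  apply/modp_eq0P; set FG := map_poly intr (f \Po g) in rFG *.
  case: (eqVneq (FG %% p) 0) => // nz.
  have p0 : p != 0 by apply: monic_neq0.
  suff RR : root (map_poly ratr (FG %% p)) beta.
    by move: (minl _ nz RR); rewrite leqNgt ltn_modp p0.
  rewrite map_modp /root.
  move: rFG rt; rewrite /root => /eqP r1 /eqP r2.
  have E := divp_eq (map_poly ratr FG) (map_poly ratr p).
  rewrite {1}E hornerD hornerM r2 mulr0 add0r in r1.
  by rewrite r1.
exists g; split; first by lia.
move=> q irr dv.
set Fq : {poly rat} := map_poly intr f.
set Gq : {poly rat} := map_poly intr g.
set Hq : {poly rat} := map_poly intr h.
have szm : forall u : {poly int}, size (map_poly intr u : {poly rat}) = size u.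
  by move=> u; apply: size_map_inj_poly => //; apply: intr_inj.
have hF : Fq = (Gq \Po Hq) - 'X.
  by rewrite /Fq ef raddfB /= map_polyX; congr (_ - _); exact: map_comp_poly.
have hFG : map_poly intr (f \Po g) = (Gq \Po (Hq \Po Gq)) - (Gq \Po 'X) :> {poly rat}.
  by rewrite map_comp_poly -/Fq hF comp_polyB comp_polyX comp_polyA comp_polyXr.
have [K EK] : exists K, map_poly intr (f \Po g) = K * ((Hq \Po Gq) - 'X) :> {poly rat}.
  by apply/dvdpP; rewrite hFG; apply: dvd_comp_sub.
have sG : size Gq = size g by apply: szm.
have sH : size Hq = size h by apply: szm.
set dg := (size g).-1.
set dh := (size h).-1.
have dg2 : (2 <= dg)%N by rewrite /dg; lia.
have dh2 : (2 <= dh)%N by rewrite /dh; lia.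
have kk := @key dg dh dg2.
have sHG : size (Hq \Po Gq) = (dh * dg).+1 by rewrite size_comp_big ?sH ?sG //; lia.
have sA : size ((Hq \Po Gq) - 'X) = (dh * dg).+1.
  by rewrite size_subX sHG //; rewrite /dh /dg; nia.
have sGH : size (Gq \Po Hq) = (dg * dh).+1 by rewrite size_comp_big ?sH ?sG //; lia.
have sF : size f = (dg * dh).+1.
  by rewrite -szm -/Fq hF size_subX sGH //; rewrite /dh /dg; nia.
have sFG : size (map_poly intr (f \Po g) : {poly rat}) = ((dg * dh) * dg).+1.
  have sFq : size Fq = (dg * dh).+1 by rewrite /Fq szm.
  rewrite map_comp_poly size_comp_big ?sFq ?sG //; rewrite /dg /dh; nia.
have A0 : (Hq \Po Gq) - 'X != 0 by rewrite -size_poly_eq0 sA.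
have K0 : K != 0.
  by apply/eqP => K0; move: sFG; rewrite EK K0 mul0r size_poly0.
have sK : size K = ((dg * dh) * dg - dg * dh).+1.
  move: sFG; rewrite EK size_mul // sA => E.
  have : (size K + (dh * dg)).+1.-1 = ((dg * dh) * dg).+1 by rewrite -E addnS.
  rewrite /=. move=> E2. rewrite /dg /dh in E2 *. nia.
have hq : ((size q).-1 <= (dg * dh) * dg - dg * dh)%N.
  case: (boolP (q %| (Hq \Po Gq) - 'X)) => dq.
    have := dvdp_leq A0 dq; rewrite sA => H; apply: aux1 H _; rewrite mulnC; exact: kk.
  rewrite -irreducible_poly_coprime // in dq.
  move: dv; rewrite EK Gauss_dvdpl // => dq2.
  have := dvdp_leq K0 dq2; rewrite sK => H; exact: aux1 H (leqnn _).
rewrite sF /= -/dg.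
have dg0 : (dg%:R : rat) != 0 by rewrite pnatr_eq0 /dg; lia.
have -> : (1 - (dg%:R)^-1) * (dg * dh)%:R * dg%:R = ((dg * dh) * dg - dg * dh)%:R :> rat.
  rewrite natrB; last by rewrite /dg; nia.
  rewrite !natrM; field; exact: dg0.
by rewrite ler_nat.
Qed.
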